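(* Let $\Gamma\in(0,1]$, $d_0\in(0,1)$, $r=1-\Gamma+\Gamma d_0$, and let $(b(t),d(t))$ be the solution of $\dot b=d$, $\dot d=\frac{\Gamma d}{1-\Gamma b}(1-b-d)-d$ with $b(0)=0$, $d(0)=d_0$, and $a(t)=b(t)+d(t)$. For every $\beta$ with $d_0\le\beta<d_0/r$, $$\inf\{t\ge0:\ a(t)\ge\beta\}=T(\beta,d_0,\Gamma):=\frac1r\ln\!\Big(\frac{1-r}{1-\frac{\beta}{d_0}r}\Big),$$ and $a(T(\beta,d_0,\Gamma))=\beta$. No finite time achieves $a(t)\ge\beta$ if $\beta\ge d_0/r$.
   Context: This o.d.e.\ is the HILT fluid limit for thresholds uniform on $[0,1]$; $a(t)$ is the fraction of destinations at time $t$. *)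

(* Defs.v *)
From Stdlib Require Export Reals.
Open Scope R_scope.

Definition is_inf (E : R -> Prop) (m : R) : Prop :=
  (forall x, E x -> m <= x) /\
  (forall m', (forall x, E x -> m' <= x) -> m' <= m).

Definition rr (d0 G : R) : R := 1 - G + G * d0.

Definition Tbeta (beta d0 G : R) : R :=
  / rr d0 G * ln ((1 - rr d0 G) / (1 - beta / d0 * rr d0 G)).

Definition is_solution (G d0 : R) (b d : R -> R) : Prop :=
  b 0 = 0 /\ d 0 = d0 /\
  (forall t, 0 <= t -> 1 - G * b t <> 0) /\
  (forall t, 0 <= t -> derivable_pt_lim b t (d t)) /\
  (forall t, 0 <= t ->
     derivable_pt_lim d t (G * d t / (1 - G * b t) * (1 - b t - d t) - d t)).

(* Main.v *)
Require Import Defs.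
From Stdlib Require Import Reals Lra.
Open Scope R_scope.

Lemma const0 (f : R -> R) :
  (forall t, 0 <= t -> derivable_pt_lim f t 0) -> forall t, 0 <= t -> f t = f 0.
Proof.
  intros H t Ht. destruct (Req_dec t 0) as [->|Hn]; [reflexivity|].
  destruct (MVT_cor2 f (fun _ => 0) 0 t) as [c [Hc _]]; [lra| |].
  - intros c Hc. apply H; lra.
  - lra.
Qed.

Lemma closed_form (G d0 : R) (b d : R -> R)
  (hG : 0 < G <= 1) (hd0 : 0 < d0 < 1)
  (hsol : is_solution G d0 b d) :
  forall t, 0 <= t -> b t + d t =
    d0 / rr d0 G - (1 - rr d0 G) * d0 / rr d0 G * exp (- (rr d0 G * t)).
Proof.
  destruct hsol as [hb0 [hdd0 [hnz [hb hd]]]].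
  set (r := rr d0 G).
  assert (hr : 0 < r < 1) by (unfold r, rr; nra).
  set (w := ((fct_cte 1 - (b + d)) / (fct_cte 1 - mult_real_fct G b))%F).
  assert (Hw : forall t, 0 <= t -> derivable_pt_lim w t 0).
  { intros t Ht.
    pose proof (hnz t Ht) as Hn.
    match goal with |- derivable_pt_lim _ _ ?z => idtac end.
    replace 0 with
      (((0 - (d t + (G * d t / (1 - G * b t) * (1 - b t - d t) - d t))) *
          (fct_cte 1 - mult_real_fct G b)%F t
        - (0 - G * d t) * (fct_cte 1 - (b + d))%F t)
       / ((fct_cte 1 - mult_real_fct G b)%F t)²).
    2:{ unfold fct_cte, minus_fct, plus_fct, mult_real_fct, Rsqr. field. exact Hn. }
    apply derivable_pt_lim_div.
    - apply derivable_pt_lim_minus; [apply derivable_pt_lim_const|].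
      apply derivable_pt_lim_plus; auto.
    - apply derivable_pt_lim_minus; [apply derivable_pt_lim_const|].
      apply derivable_pt_lim_scal; auto.
    - unfold fct_cte, minus_fct, mult_real_fct. exact Hn. }
  assert (Hinv : forall t, 0 <= t -> d t = d0 - r * b t).
  { intros t Ht. pose proof (const0 w Hw t Ht) as E.
    unfold w, div_fct, fct_cte, minus_fct, plus_fct, mult_real_fct in E.
    rewrite hb0, hdd0 in E.
    pose proof (hnz t Ht) as Hn.
    replace (1 - G * 0) with 1 in E by ring.
    apply (f_equal (fun x => x * (1 - G * b t))) in E.
    field_simplify in E; [|exact Hn].
    unfold r, rr. nra. }
  set (v := (fun x => (b x - d0 / r) * exp (r * x))).
  assert (Hv : forall t, 0 <= t -> derivable_pt_lim v t 0).
  { intros t Ht.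
    replace 0 with ((d t - 0) * exp (r * t) + (b t - d0 / r) * (exp (r * t) * (r * 1))).
    2:{ rewrite Hinv by exact Ht. field. lra. }
    apply (derivable_pt_lim_mult (fun x => b x - d0 / r) (fun x => exp (r * x))).
    - apply (derivable_pt_lim_minus b (fct_cte (d0 / r))); auto.
      apply derivable_pt_lim_const.
    - apply (derivable_pt_lim_comp (mult_real_fct r id) exp).
      + apply derivable_pt_lim_scal, derivable_pt_lim_id.
      + apply derivable_pt_lim_exp. }
  intros t Ht.
  pose proof (const0 v Hv t Ht) as E. unfold v in E.
  rewrite hb0, Rmult_0_r, exp_0 in E.
  rewrite (Hinv t Ht).
  assert (Hb : b t = d0 / r - d0 / r * exp (- (r * t))).
  { rewrite exp_Ropp.
    assert (0 < exp (r * t)) by apply exp_pos.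
    replace (b t) with ((b t - d0/r) * exp(r*t) * / exp(r*t) + d0/r) by (field; lra).
    rewrite E. field. lra. }
  rewrite Hb. field. lra.
Qed.

Theorem theorem6 (G d0 : R) (b d : R -> R)
  (hG : 0 < G <= 1) (hd0 : 0 < d0 < 1)
  (hsol : is_solution G d0 b d) :
  (forall beta, d0 <= beta < d0 / rr d0 G ->
     is_inf (fun t => 0 <= t /\ b t + d t >= beta) (Tbeta beta d0 G) /\
     b (Tbeta beta d0 G) + d (Tbeta beta d0 G) = beta) /\
  (forall beta, beta >= d0 / rr d0 G ->
     forall t, 0 <= t -> b t + d t < beta).
Proof.
  pose proof (closed_form G d0 b d hG hd0 hsol) as CF.
  assert (hr : 0 < rr d0 G < 1) by (unfold rr; nra).
  set (r := rr d0 G) in *.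
  assert (HK : 0 < (1 - r) * d0 / r).
  { apply Rdiv_lt_0_compat; [apply Rmult_lt_0_compat|]; lra. }
  split.
  - intros beta [Hb1 Hb2].
    assert (Hbr : beta * r < d0).
    { apply (Rmult_lt_compat_r r) in Hb2; [|lra].
      unfold Rdiv in Hb2. rewrite Rmult_assoc, Rinv_l in Hb2; lra. }
    set (D := 1 - beta / d0 * r).
    assert (HD : 0 < D <= 1 - r).
    { unfold D. split.
      - assert (beta / d0 * r < 1); [|lra].
        unfold Rdiv. rewrite Rmult_comm, <- Rmult_assoc.
        apply (Rmult_lt_reg_r d0); [lra|]. rewrite Rmult_assoc, Rinv_l; lra.
      - assert (1 <= beta / d0); [|nra].
        apply (Rmult_le_reg_r d0); [lra|]. unfold Rdiv.
        rewrite Rmult_assoc, Rinv_l; lra. }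
    set (X := (1 - r) / D).
    assert (HX : 1 <= X).
    { unfold X. apply (Rmult_le_reg_r D); [lra|]. unfold Rdiv.
      rewrite Rmult_assoc, Rinv_l; lra. }
    assert (HT : Tbeta beta d0 G = / r * ln X) by reflexivity.
    assert (HlnX : 0 <= ln X).
    { destruct (Req_dec X 1) as [->|Hn]; [rewrite ln_1; lra|].
      rewrite <- ln_1. left. apply ln_increasing; lra. }
    assert (HT0 : 0 <= Tbeta beta d0 G).
    { rewrite HT. apply Rmult_le_pos; [left; apply Rinv_0_lt_compat|]; lra. }
    assert (Hexp : exp (- (r * Tbeta beta d0 G)) = D / (1 - r)).
    { rewrite HT. replace (r * (/ r * ln X)) with (ln X) by (field; lra).
      rewrite exp_Ropp, exp_ln by lra. unfold X. field. lra. }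
    assert (HaT : b (Tbeta beta d0 G) + d (Tbeta beta d0 G) = beta).
    { rewrite CF by exact HT0. rewrite Hexp. unfold D. field. lra. }
    split; [|exact HaT].
    split.
    + intros t [Ht Hat]. rewrite CF in Hat by exact Ht.
      destruct (Rle_or_lt (Tbeta beta d0 G) t) as [|Hlt]; [assumption|].
      exfalso.
      assert (exp (- (r * Tbeta beta d0 G)) < exp (- (r * t))).
      { apply exp_increasing. nra. }
      rewrite <- HaT, CF in Hat by exact HT0.
      assert ((1 - r) * d0 / r * exp (- (r * Tbeta beta d0 G)) <
              (1 - r) * d0 / r * exp (- (r * t))).
      { apply Rmult_lt_compat_l; assumption. }
      lra.
    + intros m' Hm'. apply Hm'. split; [exact HT0|]. rewrite HaT; lra.
  - intros beta Hb t Ht. rewrite CF by exact Ht.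
    assert (0 < (1 - r) * d0 / r * exp (- (r * t))).
    { apply Rmult_lt_0_compat; [exact HK|apply exp_pos]. }
    lra.
Qed.
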